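(* Let $H$ be a finitely presented Heyting algebra, let $H[x]$ be the coproduct in the category of Heyting algebras of $H$ with the free Heyting algebra on one generator $x$, let $i_x:H\to H[x]$ be the canonical inclusion, and let $\exists_x:H[x]\to H$ be a left adjoint of $i_x$ (i.e. $\exists_x.f\le h$ iff $f\le i_x(h)$). Let $f\in H[x]$ be monotone. Then the map $h\mapsto f(h)$ on $H$ has a greatest fixed point, equal to $\exists_x.(x\wedge(x\to f))$.
   Context: For $h_0\in H$, $f(h_0)$ denotes the image of $f$ under the unique Heyting algebra morphism $H[x]\to H$ that is the identity on $H$ and sends $x$ to $h_0$. $f\in H[x]$ is monotone if $h_0\le h_1$ implies $f(h_0)\le f(h_1)$. Elements of $H$ are identified with their images under $i_x$. *)

(* Defs.v *)
From Stdlib Require Import List.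

Set Implicit Arguments.

Record HeytingAlgebra := {
  ha_car :> Type;
  ha_le : ha_car -> ha_car -> Prop;
  ha_top : ha_car;
  ha_bot : ha_car;
  ha_meet : ha_car -> ha_car -> ha_car;
  ha_join : ha_car -> ha_car -> ha_car;
  ha_imp : ha_car -> ha_car -> ha_car;
  ha_le_refl : forall a, ha_le a a;
  ha_le_trans : forall a b c, ha_le a b -> ha_le b c -> ha_le a c;
  ha_le_antisym : forall a b, ha_le a b -> ha_le b a -> a = b;
  ha_top_max : forall a, ha_le a ha_top;
  ha_bot_min : forall a, ha_le ha_bot a;
  ha_meet_glb : forall a b c, ha_le c (ha_meet a b) <-> (ha_le c a /\ ha_le c b);
  ha_join_lub : forall a b c, ha_le (ha_join a b) c <-> (ha_le a c /\ ha_le b c);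
  ha_imp_adj : forall a b c, ha_le (ha_meet c a) b <-> ha_le c (ha_imp a b)
}.

Arguments ha_le {h}.
Arguments ha_top {h}.
Arguments ha_bot {h}.
Arguments ha_meet {h}.
Arguments ha_join {h}.
Arguments ha_imp {h}.

Definition ha_morphism (A B : HeytingAlgebra) (f : A -> B) : Prop :=
  f ha_top = ha_top /\ f ha_bot = ha_bot /\
  (forall a b, f (ha_meet a b) = ha_meet (f a) (f b)) /\
  (forall a b, f (ha_join a b) = ha_join (f a) (f b)) /\
  (forall a b, f (ha_imp a b) = ha_imp (f a) (f b)).

Arguments ha_morphism {A B} f.

Inductive hterm (V : Type) : Type :=
| HVar : V -> hterm V
| HTop : hterm V
| HBot : hterm V
| HMeet : hterm V -> hterm V -> hterm V
| HJoin : hterm V -> hterm V -> hterm V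
| HImp : hterm V -> hterm V -> hterm V.

Fixpoint heval (V : Type) (K : HeytingAlgebra) (v : V -> K) (t : hterm V) : K :=
  match t with
  | HVar a => v a
  | HTop _ => ha_top
  | HBot _ => ha_bot
  | HMeet t1 t2 => ha_meet (@heval V K v t1) (@heval V K v t2)
  | HJoin t1 t2 => ha_join (@heval V K v t1) (@heval V K v t2)
  | HImp t1 t2 => ha_imp (@heval V K v t1) (@heval V K v t2)
  end.

Arguments heval {V K} v t.

Definition satisfies (V : Type) (K : HeytingAlgebra) (v : V -> K)
    (rels : list (hterm V * hterm V)) : Prop :=
  forall r, In r rels -> heval v (fst r) = heval v (snd r).

Arguments satisfies {V K} v rels.

Definition finitely_presented (H : HeytingAlgebra) : Prop :=
  exists (n : nat) (gen : {i : nat | i < n} -> H)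
         (rels : list (hterm {i : nat | i < n} * hterm {i : nat | i < n})),
    satisfies gen rels /\
    forall (K : HeytingAlgebra) (v : {i : nat | i < n} -> K),
      satisfies v rels ->
      (exists phi : H -> K, ha_morphism phi /\ forall i, phi (gen i) = v i) /\
      (forall phi psi : H -> K, ha_morphism phi -> ha_morphism psi ->
         (forall i, phi (gen i) = v i) -> (forall i, psi (gen i) = v i) ->
         forall a, phi a = psi a).

(** (Hx, i, x) is the coproduct of H with the free Heyting algebra on one
    generator x, i being the canonical inclusion: morphisms out of the free
    algebra on one generator correspond to elements, so the universal
    property reads as follows. *)
Definition is_coproduct_free1 (H Hx : HeytingAlgebra) (i : H -> Hx) (x : Hx)
  : Prop :=
  ha_morphism i /\
  forall (K : HeytingAlgebra) (g : H -> K) (k : K), ha_morphism g ->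
    (exists e : Hx -> K, ha_morphism e /\ (forall h, e (i h) = g h) /\ e x = k) /\
    (forall e1 e2 : Hx -> K,
       ha_morphism e1 -> (forall h, e1 (i h) = g h) -> e1 x = k ->
       ha_morphism e2 -> (forall h, e2 (i h) = g h) -> e2 x = k ->
       forall y, e1 y = e2 y).

(** [e] is the (unique) morphism H[x] -> H that is the identity on H and
    sends x to h0; so f(h0) = e f. *)
Definition is_subst (H Hx : HeytingAlgebra) (i : H -> Hx) (x : Hx) (h0 : H)
    (e : Hx -> H) : Prop :=
  ha_morphism e /\ (forall h, e (i h) = h) /\ e x = h0.

Arguments is_subst {H Hx} i x h0 e.

Definition monotone_poly (H Hx : HeytingAlgebra) (i : H -> Hx) (x : Hx)
    (f : Hx) : Prop :=
  forall h0 h1 : H, ha_le h0 h1 ->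
    forall e0 e1, is_subst i x h0 e0 -> is_subst i x h1 e1 ->
      ha_le (e0 f) (e1 f).

Arguments monotone_poly {H Hx} i x f.
Arguments is_coproduct_free1 {H Hx} i x.

(* Main.v *)
Require Import Defs.
From Stdlib Require Import ProofIrrelevance.

Section HA.
Variable A : HeytingAlgebra.
Implicit Types a b c p q : A.

Lemma le_r a : ha_le a a. Proof. apply ha_le_refl. Qed.
Lemma le_t a b c : ha_le a b -> ha_le b c -> ha_le a c. Proof. apply ha_le_trans. Qed.
Lemma le_as a b : ha_le a b -> ha_le b a -> a = b. Proof. apply ha_le_antisym. Qed.
Lemma m_l a b : ha_le (ha_meet a b) a.
Proof. apply (proj1 (proj1 (ha_meet_glb A a b _) (le_r _))). Qed.
Lemma m_r a b : ha_le (ha_meet a b) b.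
Proof. apply (proj2 (proj1 (ha_meet_glb A a b _) (le_r _))). Qed.
Lemma m_i a b c : ha_le c a -> ha_le c b -> ha_le c (ha_meet a b).
Proof. intros; apply ha_meet_glb; auto. Qed.
Lemma j_l a b : ha_le a (ha_join a b).
Proof. apply (proj1 (proj1 (ha_join_lub A a b _) (le_r _))). Qed.
Lemma j_r a b : ha_le b (ha_join a b).
Proof. apply (proj2 (proj1 (ha_join_lub A a b _) (le_r _))). Qed.
Lemma j_e a b c : ha_le a c -> ha_le b c -> ha_le (ha_join a b) c.
Proof. intros; apply ha_join_lub; auto. Qed.
Lemma mp a b : ha_le (ha_meet (ha_imp a b) a) b.
Proof. apply ha_imp_adj, le_r. Qed.
Lemma imp_i a b c : ha_le (ha_meet c a) b -> ha_le c (ha_imp a b).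
Proof. apply ha_imp_adj. Qed.
Lemma imp_e c a b : ha_le c (ha_imp a b) -> ha_le c a -> ha_le c b.
Proof. intros H1 H2. eapply le_t; [|apply (mp a b)]. apply m_i; auto. Qed.
Lemma meet_le a b : ha_le a b -> ha_meet a b = a.
Proof. intros; apply le_as; [apply m_l| apply m_i; auto using le_r]. Qed.

Arguments le_t {a b c}.
Arguments j_e {a b c}.
Arguments m_i {a b c}.
Arguments imp_i {a b c}.
Arguments imp_e {c a b}.
Arguments meet_le {a b}.
Arguments le_as {a b}.
Variable a : A.
Definition D := {h : A | ha_le h a}.
Lemma deq (u v : D) : proj1_sig u = proj1_sig v -> u = v.
Proof. destruct u, v; simpl; intros ->; f_equal; apply proof_irrelevance. Qed.

Definition Dle (u v : D) := ha_le (proj1_sig u) (proj1_sig v).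
Definition Dtop : D := exist (fun h => ha_le h a) a (le_r a).
Definition Dbot : D := exist (fun h => ha_le h a) ha_bot (ha_bot_min A a).
Definition Dmeet (u v : D) : D :=
  exist (fun h => ha_le h a) (ha_meet (proj1_sig u) (proj1_sig v)) (le_t (m_l _ _) (proj2_sig u)).
Definition Djoin (u v : D) : D :=
  exist (fun h => ha_le h a) (ha_join (proj1_sig u) (proj1_sig v)) (j_e (proj2_sig u) (proj2_sig v)).
Definition Dimp (u v : D) : D :=
  exist (fun h => ha_le h a) (ha_meet a (ha_imp (proj1_sig u) (proj1_sig v))) (m_l _ _).

Definition DHA : HeytingAlgebra.
Proof.
  refine (@Build_HeytingAlgebra D Dle Dtop Dbot Dmeet Djoin Dimp _ _ _ _ _ _ _ _);
  unfold Dle; simpl.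
  - intros; apply le_r.
  - intros; eapply le_t; eauto.
  - intros; apply deq, le_as; auto.
  - intros [u Hu]; exact Hu.
  - intros; apply ha_bot_min.
  - intros; apply ha_meet_glb.
  - intros; apply ha_join_lub.
  - intros [u Hu] [v Hv] [w Hw]; simpl; split; intro H1.
    + apply m_i; auto. apply imp_i; auto.
    + apply ha_imp_adj. eapply le_t; [exact H1|apply m_r].
Defined.

Definition phi (h : A) : DHA := exist (fun z => ha_le z a) (ha_meet a h) (m_l _ _).

Lemma phi_morph : ha_morphism phi.
Proof.
  unfold phi; repeat split; intros; apply deq; simpl.
  - apply meet_le, ha_top_max.
  - apply le_as; [apply m_r|apply ha_bot_min].
  - apply le_as.
    + apply m_i; apply m_i; eauto using m_l, m_r, le_t.
    + apply m_i; [eapply le_t; apply m_l|]. apply m_i.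
      * eapply le_t; [apply m_l|apply m_r].
      * eapply le_t; [apply m_r|apply m_r].
  - apply le_as.
    + (* distributivity *)
      assert (Hd : ha_le (ha_join a0 b) (ha_imp a (ha_join (ha_meet a a0) (ha_meet a b)))).
      2: { eapply le_t; [|apply (mp a)]. apply m_i; [eapply le_t; [apply m_r|exact Hd]|apply m_l]. }
      apply j_e; apply imp_i.
      * eapply le_t; [|apply j_l]. apply m_i; [apply m_r|apply m_l].
      * eapply le_t; [|apply j_r]. apply m_i; [apply m_r|apply m_l].
    + apply j_e; (apply m_i; [apply m_l| eapply le_t; [apply m_r| first [apply j_l|apply j_r]]]).
  - apply le_as.
    + apply m_i; [apply m_l|]. apply imp_i. apply m_i.
      * eapply le_t; [apply m_r|apply m_l].
      * eapply imp_e; [eapply le_t; [apply m_l|apply m_r]|].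
        eapply le_t; [apply m_r|apply m_r].
    + apply m_i; [apply m_l|]. apply imp_i.
      apply (@le_t _ (ha_meet a b)); [|apply m_r].
      eapply imp_e; [eapply le_t; [apply m_l|apply m_r]|].
      apply m_i; [eapply le_t; [apply m_l|apply m_l]|apply m_r].
Qed.
End HA.
Arguments le_r {A}. Arguments le_t {A a b c}. Arguments le_as {A a b}.
Arguments m_l {A}. Arguments m_r {A}. Arguments m_i {A a b c}.
Arguments j_l {A}. Arguments j_r {A}. Arguments j_e {A a b c}.
Arguments mp {A}. Arguments imp_i {A a b c}. Arguments imp_e {A c a b}.
Arguments meet_le {A a b}. Arguments deq {A a}. Arguments phi {A}.
Arguments DHA {A}. Arguments phi_morph {A}.

Lemma comp_morph (A B C : HeytingAlgebra) (f : A -> B) (g : B -> C) :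
  ha_morphism f -> ha_morphism g -> ha_morphism (fun z => g (f z)).
Proof.
  intros (f1&f2&f3&f4&f5) (g1&g2&g3&g4&g5).
  repeat split; intros; [rewrite f1, g1|rewrite f2, g2|rewrite f3, g3|rewrite f4, g4|rewrite f5, g5]; auto.
Qed.

Arguments comp_morph {A B C f g}.

Lemma morph_mono (A B : HeytingAlgebra) (f : A -> B) (p q : A) :
  ha_morphism f -> ha_le p q -> ha_le (f p) (f q).
Proof.
  intros (_&_&f3&_) Hpq. rewrite <- (meet_le Hpq), f3. apply m_r.
Qed.

Theorem mainTheorem9 (H Hx : HeytingAlgebra) (i : H -> Hx) (x : Hx)
  (ex : Hx -> H) (f : Hx) :
  finitely_presented H ->
  is_coproduct_free1 i x ->
  (forall (p : Hx) (h : H), ha_le (ex p) h <-> ha_le p (i h)) ->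
  monotone_poly i x f ->
  let g := ex (ha_meet x (ha_imp x f)) in
  (forall e, is_subst i x g e -> e f = g) /\
  (forall (h : H) e, is_subst i x h e -> e f = h -> ha_le h g).
Proof.
  intros _ [Hi Hcop] Hex Hmon g.
  set (q := ha_meet x (ha_imp x f)) in g.
  assert (Hid : ha_morphism (fun h : H => h)) by (repeat split).
  assert (Hsub : forall h, exists e, is_subst i x h e).
  { intro h. destruct (Hcop H (fun z => z) h Hid) as [[e (He1&He2&He3)] _].
    exists e; exact (conj He1 (conj He2 He3)). }
  assert (F1 : forall h e p, is_subst i x h e -> ha_le (e p) (ex p)).
  { intros h e p (Hm&Hei&_). rewrite <- (Hei (ex p)). apply morph_mono; auto.
    apply Hex, le_r. }
  assert (Eq : forall h e, is_subst i x h e -> e q = ha_meet h (ha_imp h (e f))).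
  { intros h e Hs. destruct Hs as ((_&_&m3&_&m5)&_&ex_). unfold q.
    rewrite m3, m5, ex_; auto. }
  assert (P2 : forall (h : H) e, is_subst i x h e -> ha_le h (e f) -> ha_le h g).
  { intros h e Hs Hle. eapply le_t; [|apply (F1 h e q Hs)]. rewrite (Eq h e Hs).
    apply m_i; [apply le_r|]. apply imp_i. eapply le_t; [apply m_l|exact Hle]. }
  split.
  2: { intros h e Hs Hf. apply (P2 h e Hs). rewrite Hf; apply le_r. }
  intros e Hs.
  destruct (Hsub ha_top) as [et Ht].
  assert (S1 : ha_le q (i (et f))).
  { destruct Ht as (Htm&Hti&Htx).
    destruct (Hcop (DHA q) (fun h => phi q (i h)) (phi q x)
                   (comp_morph Hi (phi_morph q))) as [_ Huniq].
    assert (U := Huniq (phi q) (fun z => phi q (i (et z)))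
                       (phi_morph q) (fun h => eq_refl) eq_refl
                       (comp_morph (comp_morph Htm Hi) (phi_morph q))).
    assert (Hxq : phi q (i (et x)) = phi q x).
    { apply deq; simpl. rewrite Htx. destruct Hi as (i1&_). rewrite i1.
      rewrite (meet_le (ha_top_max _ q)). apply eq_sym, meet_le. apply m_l. }
    specialize (U (fun h => f_equal (fun z => phi q (i z)) (Hti h)) Hxq f).
    apply (f_equal (@proj1_sig _ _)) in U. simpl in U.
    assert (Hqf : ha_le q f).
    { unfold q. eapply le_t; [|apply (mp x f)]. apply m_i; [apply m_r|apply m_l]. }
    rewrite (meet_le Hqf) in U. rewrite U. apply m_r. }
  assert (S2 : ha_le g (et f)) by (apply Hex; exact S1).
  assert (S3 : ha_meet g (et f) = ha_meet g (e f)).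
  { destruct Ht as (Htm&Hti&Htx). destruct Hs as (Hem&Hei&Hexx).
    destruct (Hcop (DHA g) (phi g) (phi g g) (phi_morph g)) as [_ Huniq].
    assert (U := Huniq (fun z => phi g (et z)) (fun z => phi g (e z))
         (comp_morph Htm (phi_morph g)) (fun h => f_equal (phi g) (Hti h))).
    assert (Hx1 : phi g (et x) = phi g g).
    { apply deq; simpl. rewrite Htx. rewrite (meet_le (ha_top_max _ g)).
      apply eq_sym, meet_le, le_r. }
    specialize (U Hx1 (comp_morph Hem (phi_morph g))
                  (fun h => f_equal (phi g) (Hei h)) (f_equal (phi g) Hexx) f).
    apply (f_equal (@proj1_sig _ _)) in U. exact U. }
  assert (A1 : ha_le g (e f)).
  { rewrite <- (meet_le S2), S3. apply m_r. }
  apply le_as.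
  2: exact A1.
  destruct (Hsub (e f)) as [ec Hc].
  apply (P2 _ ec Hc). apply (Hmon g (e f) A1 e ec Hs Hc).
Qed.
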